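(* Let $S$ be a semibounded relation in $\mathfrak H$ with lower bound $\gamma\in\mathbb R$, $c\le\gamma$, $Q_c$ a representing map for $\mathfrak t(S)-c$ with companion relation $J_c$, and let $H$ be a semibounded selfadjoint extension of $S$ which is bounded below by $c$. Then: (a) for $\{h,h'\}\in S$ and $\{f,f'\}\in H$ with $f\in\mathrm{dom}\,J_c^*$, $$(\mathfrak t(H)-c)[f-h,f-h]-\|(J_c^* )_{\rm reg}f-Q_ch\|^2=(\mathfrak t(H)-c)[f,f]-\|(J_c^* )_{\rm reg}f\|^2;$$ (b) for all $\{f,f'\}\in H$ and $\{h,h'\}\in S$ one has $f\in\mathrm{dom}\,J_c^*$ and $(\mathfrak t(H)-c)[f-h,f-h]\ge\|(J_c^* )_{\rm reg}f-Q_ch\|^2$; (c) if $\mathfrak t_H\subset\mathfrak t_{S_{{\rm K},c}}$, then equality holds in (b) for all $\{f,f'\}\in H$, $\{h,h'\}\in S$.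
   Context: Linear relations are linear subspaces of $\mathfrak H\times\mathfrak K$; $T^*$ adjoint, $T^{**}$ closure; products $RT$; $c+T=\{\{f,g+cf\}:\{f,g\}\in T\}$; for closed $T$, $T_{\rm reg}=\{\{f,(I-\pi)g\}:\{f,g\}\in T\}$ with $\pi$ the projection onto $\mathrm{mul}\,T$. $S$ semibounded with lower bound $\gamma$: $\gamma$ is the supremum of $c$ with $(\varphi',\varphi)\ge c\|\varphi\|^2$ on $S$. For a semibounded relation $T$, $\mathfrak t(T)[\varphi,\psi]=(\varphi',\psi)$ for $\{\varphi,\varphi'\},\{\psi,\psi'\}\in T$. A representing map for $\mathfrak t(S)-c$ is a linear operator $Q_c$ into a Hilbert space with $\mathrm{dom}\,Q_c=\mathrm{dom}\,S$ and $\mathfrak t(S)[\varphi,\psi]=c(\varphi,\psi)+(Q_c\varphi,Q_c\psi)$; companion relation $J_c=\{\{Q_c\varphi,\varphi'-c\varphi\}:\{\varphi,\varphi'\}\in S\}$; Kreĭn type extension $S_{{\rm K},c}=c+J_c^{**}J_c^*$. For semibounded selfadjoint $H$, $\mathfrak t_H$ is its associated closed form (closure of $\mathfrak t(H)$); $\mathfrak t_1\subset\mathfrak t_2$ means extension. ''Bounded below by $c$'' means $(f',f)\ge c\|f\|^2$ for $\{f,f'\}\in H$. *)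

(* Defs.v *)
From mathcomp Require Import all_boot all_order all_algebra.
From mathcomp Require Import all_classical all_reals.
From mathcomp Require Export complex.
Set Implicit Arguments. Unset Strict Implicit. Unset Printing Implicit Defensive.
Import Order.TTheory GRing.Theory Num.Theory.
Local Open Scope ring_scope.

Definition rC (R : realType) (x : R) : R[i] := (x%:C)%C.

Record hilbert (R : realType) := Hilbert {
  hsort :> lmodType R[i];
  hinner : hsort -> hsort -> R[i];
  hinner_linear : forall (a : R[i]) (x y z : hsort),
      hinner (a *: x + y) z = a * hinner x z + hinner y z;
  hinner_conj : forall x y : hsort, hinner y x = Num.conj (hinner x y);
  hinner_ge0 : forall x : hsort, 0 <= hinner x x;
  hinner_eq0 : forall x : hsort, hinner x x = 0 -> x = 0;
  hcomplete : forall u : nat -> hsort,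
      (forall e : R, 0 < e -> exists N : nat, forall m n : nat, (N <= m)%N -> (N <= n)%N ->
          Num.sqrt (complex.Re (hinner (u m - u n) (u m - u n))) < e) ->
      exists l : hsort, forall e : R, 0 < e -> exists N : nat, forall n : nat, (N <= n)%N ->
          Num.sqrt (complex.Re (hinner (u n - l) (u n - l))) < e
}.

Section LinearRelations.
Variable R : realType.
Implicit Types H K G : hilbert R.

Definition inner {H} (x y : H) : R[i] := hinner x y.
Definition hnorm {H} (x : H) : R := Num.sqrt (complex.Re (inner x x)).

Definition lrel H K := H -> K -> Prop.

Definition linrel {H K} (T : lrel H K) : Prop :=
  T 0 0 /\ forall (a : R[i]) f f' g g', T f f' -> T g g' -> T (a *: f + g) (a *: f' + g').

Definition rdom {H K} (T : lrel H K) : set H := fun f => exists g, T f g.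
Definition rmul {H K} (T : lrel H K) : set K := fun g => T 0 g.

Definition rsub {H K} (T1 T2 : lrel H K) : Prop := forall f g, T1 f g -> T2 f g.

Definition adjoint {H K} (T : lrel H K) : lrel K H :=
  fun g g' => forall f f', T f f' -> inner f' g = inner f g'.

Definition rclosure {H K} (T : lrel H K) : lrel H K := adjoint (adjoint T).

Definition rprod {H K G} (S : lrel K G) (T : lrel H K) : lrel H G :=
  fun f h => exists g, T f g /\ S g h.

Definition rshift {H} (c : R) (T : lrel H H) : lrel H H :=
  fun f g => exists g0, T f g0 /\ g = g0 + rC c *: f.

(* orthogonal projection onto a (closed) subspace M: the y in M with x - y
   orthogonal to M (chosen by description; it exists uniquely when M is a
   closed linear subspace of a Hilbert space) *)
Definition oproj {H} (M : set H) (x : H) : H :=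
  xget 0 [set y | M y /\ forall m, M m -> inner (x - y) m = 0].

Definition rreg {H K} (T : lrel H K) : lrel H K :=
  fun f g => exists g1, T f g1 /\ g = g1 - oproj (rmul T) g1.

(* the value T f of a relation which is an operator (e.g. T_reg) *)
Definition opval {H K} (T : lrel H K) (f : H) : K := xget 0 [set g | T f g].

Definition selfadjoint {H} (T : lrel H H) : Prop := forall f g, T f g <-> adjoint T f g.

Definition bounded_below_by {H} (T : lrel H H) (c : R) : Prop :=
  forall f f', T f f' -> rC (c * hnorm f ^+ 2) <= inner f' f.

Definition semibounded {H} (T : lrel H H) : Prop := exists c, bounded_below_by T c.

Definition lower_bound {H} (T : lrel H H) (gamma : R) : Prop :=
  (forall c, bounded_below_by T c -> c <= gamma) /\
  (forall u, (forall c, bounded_below_by T c -> c <= u) -> gamma <= u).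

Definition tform {H} (T : lrel H H) (phi psi : H) : R[i] :=
  inner (opval T phi) psi.

Definition tform_shift {H} (T : lrel H H) (c : R) (phi psi : H) : R[i] :=
  tform T phi psi - rC c * inner phi psi.

(* Q is a representing map for t(S) - c (Q a linear operator with domain
   dom S into the Hilbert space G; its values off dom S are irrelevant) *)
Definition representing_map {H G} (S : lrel H H) (c : R) (Q : H -> G) : Prop :=
  (forall (a : R[i]) phi psi, rdom S phi -> rdom S psi -> Q (a *: phi + psi) = a *: Q phi + Q psi) /\
  (forall phi psi, rdom S phi -> rdom S psi ->
     tform S phi psi = rC c * inner phi psi + inner (Q phi) (Q psi)).

Definition companion {H G} (S : lrel H H) (c : R) (Q : H -> G) : lrel G H :=
  fun u v => exists phi phi', S phi phi' /\ u = Q phi /\ v = phi' - rC c *: phi.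

Definition krein_ext {H G} (S : lrel H H) (c : R) (Q : H -> G) : lrel H H :=
  rshift c (rprod (rclosure (companion S c Q)) (adjoint (companion S c Q))).

(* Closure of the form t(T) of a semibounded relation T, given as its graph:
   form_closure T f g z  means f, g are in the domain of the closure of t(T)
   and its value at [f,g] is z: there are sequences u_n -> f, v_n -> g in
   dom T, which are t(T)-Cauchy, with t(T)[u_n, v_n] -> z. *)
Definition tconv {H} (T : lrel H H) (u : nat -> H) (f : H) : Prop :=
  (forall n, rdom T (u n)) /\
  (forall e : R, 0 < e -> exists N, forall n, (N <= n)%N -> hnorm (u n - f) < e) /\
  (forall e : R, 0 < e -> exists N, forall m n, (N <= m)%N -> (N <= n)%N ->
      `| tform T (u n - u m) (u n - u m) | < rC e).

Definition form_closure {H} (T : lrel H H) (f g : H) (z : R[i]) : Prop :=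
  exists u v : nat -> H, tconv T u f /\ tconv T v g /\
    (forall e : R, 0 < e -> exists N, forall n, (N <= n)%N ->
        `| tform T (u n) (v n) - z | < rC e).

Definition form_sub {H} (t1 t2 : H -> H -> R[i] -> Prop) : Prop :=
  forall f g z, t1 f g z -> t2 f g z.

End LinearRelations.

(* Main.v *)
Require Import Defs.
From mathcomp Require Import all_boot all_order all_algebra.
From mathcomp Require Import all_classical all_reals.
From mathcomp Require Import complex.
From mathcomp Require Import ring lra.
Import Order.TTheory GRing.Theory Num.Theory.
Local Open Scope ring_scope.
Set Implicit Arguments. Unset Strict Implicit. Unset Printing Implicit Defensive.

Section Cplx.
Variable R : realType.
Local Notation C := (R[i]).
Definition nc (z : C) : R := Normc.normc z.

Lemma Re_rC (r : R) : complex.Re (rC r) = r. Proof. by []. Qed.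
Lemma Im_rC (r : R) : complex.Im (rC r) = 0. Proof. by []. Qed.
Lemma ReD (x y : C) : complex.Re (x + y) = complex.Re x + complex.Re y.
Proof. by case: x => a b; case: y. Qed.
Lemma ImD (x y : C) : complex.Im (x + y) = complex.Im x + complex.Im y.
Proof. by case: x => a b; case: y. Qed.
Lemma ReN (x : C) : complex.Re (- x) = - complex.Re x.
Proof. by case: x. Qed.
Lemma ReB (x y : C) : complex.Re (x - y) = complex.Re x - complex.Re y.
Proof. by rewrite ReD ReN. Qed.
Lemma ImB (x y : C) : complex.Im (x - y) = complex.Im x - complex.Im y.
Proof. by case: x => a b; case: y. Qed.
Lemma ReM_rC (r : R) (x : C) : complex.Re (rC r * x) = r * complex.Re x.
Proof. case: x => a b /=. by rewrite mul0r subr0. Qed.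
Lemma ImM_rC (r : R) (x : C) : complex.Im (rC r * x) = r * complex.Im x.
Proof. case: x => a b /=. by rewrite mul0r addr0. Qed.
Lemma Re_conj (x : C) : complex.Re (Num.conj x) = complex.Re x.
Proof. by case: x. Qed.
Lemma conj_rC (r : R) : Num.conj (rC r) = rC r.
Proof. exact: conjc_real. Qed.
Lemma rCD (a b : R) : rC (a + b) = rC a + rC b.
Proof. exact: rmorphD. Qed.
Lemma rCB (a b : R) : rC (a - b) = rC a - rC b.
Proof. exact: rmorphB. Qed.
Lemma rCM (a b : R) : rC (a * b) = rC a * rC b.
Proof. exact: rmorphM. Qed.
Lemma rCN (a : R) : rC (- a) = - rC a.
Proof. exact: rmorphN. Qed.
Lemma rC0 : rC (0 : R) = 0. Proof. by []. Qed.
Lemma rC1 : rC (1 : R) = 1. Proof. by []. Qed.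
Lemma rC_inj (a b : R) : rC a = rC b -> a = b.
Proof. by case. Qed.
Lemma rC_Re (z : C) : complex.Im z = 0 -> z = rC (complex.Re z).
Proof. by case: z => a b /= ->. Qed.
Lemma rC_le (a b : R) : (rC a <= rC b) = (a <= b).
Proof. by rewrite /rC lecR. Qed.
Lemma le_rC (a : R) (z : C) : rC a <= z -> complex.Im z = 0 /\ a <= complex.Re z.
Proof. rewrite lecE => /andP[/eqP h1 h2]; split => //. Qed.
Lemma conjK (z : C) : Num.conj (Num.conj z) = z. Proof. exact: conjCK. Qed.
Lemma conjD (x y : C) : Num.conj (x + y) = Num.conj x + Num.conj y. Proof. exact: rmorphD. Qed.
Lemma conjB (x y : C) : Num.conj (x - y) = Num.conj x - Num.conj y. Proof. exact: rmorphB. Qed.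
Lemma conjM (x y : C) : Num.conj (x * y) = Num.conj x * Num.conj y. Proof. exact: rmorphM. Qed.
Lemma conjN (x : C) : Num.conj (- x) = - Num.conj x. Proof. exact: rmorphN. Qed.
Lemma conj0 : Num.conj (0 : C) = 0. Proof. exact: rmorph0. Qed.

Lemma nc_ge0 (z : C) : 0 <= nc z.
Proof. by case: z => a b; rewrite /nc /=; apply: sqrtr_ge0. Qed.
Lemma ncM (x y : C) : nc (x * y) = nc x * nc y.
Proof. exact: Normc.normcM. Qed.
Lemma nc_eq0 (z : C) : nc z = 0 -> z = 0.
Proof. exact: Normc.eq0_normc. Qed.
Lemma Re_le_nc (z : C) : complex.Re z <= nc z.
Proof.
case: z => a b; rewrite /nc /=.
have h : a <= `|a| by apply: ler_norm.
apply: (le_trans h). rewrite -sqrtr_sqr. apply: ler_wsqrtr.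
rewrite lerDl. apply: sqr_ge0.
Qed.
Lemma nc_conj (z : C) : nc (Num.conj z) = nc z.
Proof. by case: z => a b; rewrite /nc /= sqrrN. Qed.
Lemma nc_rC (r : R) : nc (rC r) = `|r|.
Proof. by rewrite /nc /rC /= expr0n /= addr0 sqrtr_sqr. Qed.
Lemma nc_sq (z : C) : rC (nc z ^+ 2) = Num.conj z * z.
Proof.
case: z => a b; rewrite /nc /rC /= sqr_sqrtr; last by rewrite addr_ge0 // sqr_ge0.
congr (_ +i* _)%C; ring.
Qed.
Lemma ncN (z : C) : nc (- z) = nc z.
Proof. by case: z => a b; rewrite /nc /= !sqrrN. Qed.
Lemma ncD (x y : C) : nc (x + y) <= nc x + nc y.
Proof. exact: le_normcD. Qed.

Lemma zero_of_re (z : C) : (forall a : C, complex.Re (a * z) <= 0) -> z = 0.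
Proof.
move=> h; have := h (Num.conj z); rewrite -nc_sq Re_rC => h2.
apply: nc_eq0. have := nc_ge0 z. nra.
Qed.


Lemma quad (a b c : R) : 0 <= a -> 0 <= c ->
  (forall r : R, 0 <= a - 2 * r * b + r ^+ 2 * c) -> b ^+ 2 <= a * c.
Proof.
move=> ha hc h.
have [c0|cpos] := eqVneq c 0.
  subst c. have [b0|bn0] := eqVneq b 0; first by subst b; nra.
  have := h ((a + 1) / (2 * b)).
  have -> : a - 2 * ((a + 1) / (2 * b)) * b + ((a + 1) / (2 * b)) ^+ 2 * 0 = -1.
    by field.
  lra.
have cp : 0 < c by rewrite lt_def cpos hc.
have := h (b / c).
have -> : a - 2 * (b / c) * b + (b / c) ^+ 2 * c = (a * c - b ^+ 2) / c by field.
move=> h2; rewrite -subr_ge0.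
have -> : a * c - b ^+ 2 = ((a * c - b ^+ 2) / c) * c by field; rewrite gt_eqF.
by rewrite mulr_ge0 // ltW.
Qed.

Lemma sq_le (u v : R) : 0 <= v -> u ^+ 2 <= v ^+ 2 -> u <= v.
Proof. move=> hv h. nra. Qed.
Lemma sq_eq (u v : R) : 0 <= u -> 0 <= v -> u ^+ 2 = v ^+ 2 -> u = v.
Proof. move=> hu hv h. apply/eqP; rewrite eq_le; apply/andP; split; nra. Qed.

End Cplx.

Section Inner.
Variables (R : realType) (H : hilbert R).
Implicit Types x y z : H.
Local Notation C := (R[i]).

Lemma inDl x y z : inner (x + y) z = inner x z + inner y z.
Proof. by have := hinner_linear 1 x y z; rewrite scale1r mul1r. Qed.
Lemma in0l z : inner (0 : H) z = 0.
Proof.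
have h := inDl 0 0 z; rewrite addr0 in h.
by apply: (@addrI _ (inner (0:H) z)); rewrite addr0 -h.
Qed.
Lemma inZl (a : C) x z : inner (a *: x) z = a * inner x z.
Proof.
have h := hinner_linear a x 0 z.
change (inner (a *: x + 0) z = a * inner x z + inner 0 z) in h.
by rewrite addr0 in0l addr0 in h.
Qed.
Lemma inNl x z : inner (- x) z = - inner x z.
Proof. by rewrite -scaleN1r inZl mulN1r. Qed.
Lemma inBl x y z : inner (x - y) z = inner x z - inner y z.
Proof. by rewrite inDl inNl. Qed.
Lemma inC x y : inner y x = Num.conj (inner x y).
Proof. exact: hinner_conj. Qed.
Lemma inDr x y z : inner z (x + y) = inner z x + inner z y.
Proof. by rewrite inC inDl conjD -!inC. Qed.
Lemma inZr (a : C) x z : inner z (a *: x) = Num.conj a * inner z x.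
Proof. by rewrite inC inZl conjM -inC. Qed.
Lemma in0r z : inner z (0 : H) = 0.
Proof. by rewrite inC in0l conj0. Qed.
Lemma inNr x z : inner z (- x) = - inner z x.
Proof. by rewrite inC inNl conjN -inC. Qed.
Lemma inBr x y z : inner z (x - y) = inner z x - inner z y.
Proof. by rewrite inDr inNr. Qed.

Lemma hnorm_ge0 x : 0 <= hnorm x.
Proof. exact: sqrtr_ge0. Qed.
Lemma inner_self x : inner x x = rC (hnorm x ^+ 2).
Proof.
have h := hinner_ge0 x.
have [h1 h2] : complex.Im (hinner x x) = 0 /\ 0 <= complex.Re (hinner x x).
  by move: h; rewrite lecE => /andP[/eqP -> ->].
by rewrite /hnorm sqr_sqrtr // {1}/inner (rC_Re h1).
Qed.
Lemma Re_inner_self x : complex.Re (inner x x) = hnorm x ^+ 2.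
Proof. by rewrite inner_self. Qed.
Lemma hnorm0 : hnorm (0 : H) = 0.
Proof. by rewrite /hnorm -/(inner _ _) in0l /= sqrtr0. Qed.
Lemma hnorm_eq0 x : hnorm x = 0 -> x = 0.
Proof.
move=> h; apply: hinner_eq0. have := inner_self x. rewrite h expr0n /= /inner => ->. by [].
Qed.
Lemma hnormZ (a : C) x : hnorm (a *: x) = nc a * hnorm x.
Proof.
apply: sq_eq; [exact: hnorm_ge0| by rewrite mulr_ge0 ?nc_ge0 ?hnorm_ge0|].
apply: rC_inj; rewrite -inner_self inZl inZr exprMn rCM nc_sq -inner_self.
by rewrite mulrA [a * _]mulrC.
Qed.
Lemma hnormN x : hnorm (- x) = hnorm x.
Proof.
rewrite -scaleN1r hnormZ. have -> : nc (-1 : C) = 1.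
  by rewrite ncN -rC1 nc_rC normr1.
by rewrite mul1r.
Qed.
Lemma hnormB_sym x y : hnorm (x - y) = hnorm (y - x).
Proof. by rewrite -hnormN opprB. Qed.
Lemma Re_inC x y : complex.Re (inner y x) = complex.Re (inner x y).
Proof. by rewrite inC Re_conj. Qed.
Lemma hnorm_sqD x y : hnorm (x + y) ^+ 2 = hnorm x ^+ 2 + hnorm y ^+ 2 + 2 * complex.Re (inner x y).
Proof.
rewrite -!Re_inner_self inDl !inDr !ReD (Re_inC x y). ring.
Qed.
Lemma Re_CS x y : complex.Re (inner x y) <= hnorm x * hnorm y.
Proof.
apply: sq_le; first by rewrite mulr_ge0 ?hnorm_ge0.
rewrite exprMn; apply: quad; rewrite ?sqr_ge0 // => r.
have := hnorm_ge0 (x - rC r *: y) => _.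
have h := hnorm_sqD x (- (rC r *: y)).
rewrite hnormN hnormZ nc_rC inNr inZr conj_rC ReN ReM_rC in h.
rewrite exprMn real_normK ?num_real // in h.
have := sqr_ge0 (hnorm (x + - (rC r *: y))). rewrite h. lra.
Qed.
Lemma nc_CS x y : nc (inner x y) <= hnorm x * hnorm y.
Proof.
set z := inner x y.
have h := Re_CS (Num.conj z *: x) y.
rewrite inZl -nc_sq Re_rC hnormZ nc_conj in h.
have hz := nc_ge0 z; rewrite le_eqVlt in hz; case/orP: hz => [/eqP <-|hz].
  by rewrite mulr_ge0 ?hnorm_ge0.
by rewrite -(ler_pM2l hz) mulrA -expr2.
Qed.
Lemma hnormD x y : hnorm (x + y) <= hnorm x + hnorm y.
Proof.
apply: sq_le; first by rewrite addr_ge0 ?hnorm_ge0.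
rewrite hnorm_sqD. have := Re_CS x y. nra.
Qed.
Lemma hnormB x y : hnorm (x - y) <= hnorm x + hnorm y.
Proof. by rewrite -(hnormN y); apply: hnormD. Qed.

End Inner.

Section Conv.
Variable R : realType.
Definition conv0 (x : nat -> R) :=
  forall e, 0 < e -> exists N, forall n, (N <= n)%N -> x n < e.

Lemma conv0_inv : conv0 (fun n => (n.+1%:R)^-1).
Proof.
move=> e he.
have h0 : 0 <= e^-1 by rewrite invr_ge0 ltW.
exists (Num.Def.archi_bound e^-1) => n hn.
have h1 := archi_boundP h0.
have h2 : (Num.Def.archi_bound e^-1)%:R <= n%:R :> R by rewrite ler_nat.
have h3 : e^-1 < n.+1%:R by rewrite -addn1 natrD; lra.
have h4 : 0 < n.+1%:R :> R by rewrite ltr0Sn.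
rewrite -(ltr_pM2l he) mulfV ?gt_eqF // in h3.
rewrite -[_^-1]mul1r ltr_pdivrMr //.
Qed.

Lemma conv0D (x y : nat -> R) : conv0 x -> conv0 y -> conv0 (fun n => x n + y n).
Proof.
move=> hx hy e he.
have he2 : 0 < e / 2 by rewrite divr_gt0.
have [N1 h1] := hx _ he2; have [N2 h2] := hy _ he2.
exists (maxn N1 N2) => n hn.
have := h1 n (leq_trans (leq_maxl _ _) hn); have := h2 n (leq_trans (leq_maxr _ _) hn).
lra.
Qed.

Lemma conv0Z (a : R) (x : nat -> R) : 0 <= a -> conv0 x -> conv0 (fun n => a * x n).
Proof.
move=> ha hx e he.
have ha1 : 0 < a + 1 by lra.
have he2 : 0 < e / (a + 1) by rewrite divr_gt0.
have [N h] := hx _ he2.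
exists N => n hn; have := h n hn => hlt.
have : a * x n <= a * (e / (a + 1)) by rewrite ler_wpM2l // ltW.
have : a * (e / (a + 1)) < e.
  rewrite mulrA ltr_pdivrMr //. nra.
lra.
Qed.

Lemma conv0_le (x y : nat -> R) : (forall n, y n <= x n) -> conv0 x -> conv0 y.
Proof.
move=> hle hx e he; have [N h] := hx _ he; exists N => n hn.
exact: le_lt_trans (hle n) (h n hn).
Qed.

Lemma le0_conv (X : R) (x : nat -> R) : (forall n, X <= x n) -> conv0 x -> X <= 0.
Proof.
move=> hle hx; apply/ler_addgt0Pr => e he; rewrite add0r.
have [N h] := hx _ he. exact: ltW (le_lt_trans (hle N) (h N (leqnn N))).
Qed.

Lemma conv0_shift (x : nat -> R) (k : nat) : conv0 x -> conv0 (fun n => x (k + n)%N).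
Proof.
move=> hx e he; have [N h] := hx _ he; exists N => n hn; apply: h.
exact: leq_trans hn (leq_addl _ _).
Qed.

End Conv.

Section Rel.
Variables (R : realType).
Local Notation C := (R[i]).

Lemma lin0 (H K : hilbert R) (T : lrel H K) : linrel T -> T 0 0.
Proof. by case. Qed.
Lemma lin_add (H K : hilbert R) (T : lrel H K) f f' g g' :
  linrel T -> T f f' -> T g g' -> T (f + g) (f' + g').
Proof. by case=> _ h hf hg; have := h 1 _ _ _ _ hf hg; rewrite !scale1r. Qed.
Lemma lin_scale (H K : hilbert R) (T : lrel H K) (a : C) f f' :
  linrel T -> T f f' -> T (a *: f) (a *: f').
Proof. by case=> h0 h hf; have := h a _ _ _ _ hf h0; rewrite !addr0. Qed.
Lemma lin_sub (H K : hilbert R) (T : lrel H K) f f' g g' :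
  linrel T -> T f f' -> T g g' -> T (f - g) (f' - g').
Proof.
move=> hl hf hg; have := lin_add hl hf (lin_scale (-1) hl hg).
by rewrite !scaleN1r.
Qed.

Lemma adjoint_lin (H K : hilbert R) (T : lrel H K) : linrel (adjoint T).
Proof.
split; first by move=> f f' _; rewrite !in0r.
move=> a g g1 h h1 hg hh f f' hT.
by rewrite inDr inZr inDr inZr (hg _ _ hT) (hh _ _ hT).
Qed.

Lemma opvalP (H K : hilbert R) (T : lrel H K) x : rdom T x -> T x (opval T x).
Proof. by move=> [g hg]; apply: (xgetPex 0); exists g. Qed.


Lemma regP (H K : hilbert R) (T : lrel H K) x :
  linrel T -> rdom T x -> T x (opval (rreg T) x).
Proof.
move=> hl [g hg].
have : rreg T x (opval (rreg T) x).
  apply: (xgetPex 0); exists (g - oproj (rmul T) g); by exists g.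
move=> [g1 [hg1 ->]].
have hy : T 0 (oproj (rmul T) g1).
  rewrite /oproj.
  case: (boolp.pselect (exists y : K, rmul T y /\ forall m, rmul T m -> inner (g1 - y) m = 0)).
    by move=> /(xgetPex 0) [].
  move=> hn; rewrite xgetPN; first exact: lin0.
  by move=> y0 hy; apply: hn; exists y0.
by have := lin_sub hl hg1 hy; rewrite subr0.
Qed.

Lemma regU (H K : hilbert R) (T : lrel H K) x g :
  linrel T -> T x g -> (forall m, T 0 m -> inner g m = 0) -> opval (rreg T) x = g.
Proof.
move=> hl hg horth.
have : rreg T x (opval (rreg T) x).
  apply: (xgetPex 0); exists (g - oproj (rmul T) g); by exists g.
move=> [g1 [hg1 ->]].
set P : set K := (fun y : K => rmul T y /\ forall m, rmul T m -> inner (g1 - y) m = 0).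
have hP : P (g1 - g).
  split; first by have := lin_sub hl hg1 hg; rewrite subrr.
  by move=> m hm; rewrite opprB addrC subrK; apply: horth.
have [hy1 hy2] : P (oproj (rmul T) g1) by apply: (xgetPex 0); exists (g1 - g).
set y := oproj (rmul T) g1 in hy1 hy2 *.
have hd : T 0 (g1 - y - g).
  have := lin_sub hl (lin_sub hl hg1 hg) hy1.
  by rewrite subrr subr0 addrAC.
apply/eqP; rewrite -subr_eq0; apply/eqP; apply: hinner_eq0.
change (inner (g1 - y - g) (g1 - y - g) = 0).
by rewrite inBl (hy2 _ hd) (horth _ hd) subrr.
Qed.

End Rel.


Section Lim.
Variable R : realType.
Local Notation C := (R[i]).

Lemma conv0M (x y : nat -> R) : (forall n, 0 <= x n) -> (forall n, 0 <= y n) ->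
  conv0 x -> conv0 y -> conv0 (fun n => x n * y n).
Proof.
move=> hx0 hy0 hx hy e he.
have [N1 h1] := hx _ ltr01; have [N2 h2] := hy _ he.
exists (maxn N1 N2) => n hn.
have := h1 n (leq_trans (leq_maxl _ _) hn); have := h2 n (leq_trans (leq_maxr _ _) hn).
have := hx0 n; have := hy0 n. nra.
Qed.

Lemma nc_lt (z : C) (e : R) : `|z| < rC e -> nc z < e.
Proof. by rewrite normc_def /rC ltcR; case: z. Qed.

Lemma inner_lim (H : hilbert R) (x y : nat -> H) (a b : H) :
  conv0 (fun n => hnorm (x n - a)) -> conv0 (fun n => hnorm (y n - b)) ->
  conv0 (fun n => nc (inner (x n) (y n) - inner a b)).
Proof.
move=> hx hy.
apply: (conv0_le (x := fun n => hnorm (x n - a) * hnorm b + hnorm (x n - a) * hnorm (y n - b)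
   + hnorm a * hnorm (y n - b))); last first.
  apply: conv0D; first apply: conv0D.
  - under eq_fun do rewrite mulrC. by apply: conv0Z => //; apply: hnorm_ge0.
  - by apply: conv0M => // n; apply: hnorm_ge0.
  - by apply: conv0Z => //; apply: hnorm_ge0.
move=> n.
have -> : inner (x n) (y n) - inner a b = inner (x n - a) (y n) + inner a (y n - b).
  rewrite inBl inBr. ring.
apply: (le_trans (ncD _ _)).
have h1 := nc_CS (x n - a) (y n); have h2 := nc_CS a (y n - b).
have h3 := hnormD b (y n - b); rewrite addrC subrK in h3.
have := hnorm_ge0 (x n - a). nra.
Qed.

Lemma orth_lim (H : hilbert R) (x : nat -> H) (p m : H) :
  (forall n, inner (x n) m = 0) -> conv0 (fun n => hnorm (x n - p)) -> inner p m = 0.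
Proof.
move=> h0 hc; apply: zero_of_re => a.
set m' := Num.conj a *: m.
have -> : a * inner p m = inner p m' by rewrite inZr conjK.
have h0' : forall n, inner (x n) m' = 0 by move=> n; rewrite inZr h0 mulr0.
apply: (le0_conv (x := fun n => hnorm m' * hnorm (x n - p))); last first.
  by apply: conv0Z => //; apply: hnorm_ge0.
move=> n.
have e1 := inBl p (x n) m'; rewrite h0' subr0 in e1.
rewrite -e1 mulrC hnormB_sym. exact: Re_CS.
Qed.

Lemma adj_lim (H K : hilbert R) (T : lrel H K) (y : nat -> K) (x : nat -> H) (f : K) (p : H) :
  (forall n, adjoint T (y n) (x n)) -> conv0 (fun n => hnorm (y n - f)) ->
  conv0 (fun n => hnorm (x n - p)) -> adjoint T f p.
Proof.
move=> hT hy hx a b hab.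
apply/eqP; rewrite -subr_eq0; apply/eqP; apply: zero_of_re => al.
apply: (le0_conv (x := fun n => hnorm (al *: b) * hnorm (y n - f) + hnorm (al *: a) * hnorm (x n - p))); last first.
  by apply: conv0D; apply: conv0Z => //; apply: hnorm_ge0.
move=> n.
have e := hT n _ _ hab.
have -> : al * (inner b f - inner a p) = inner (al *: b) (f - y n) + inner (al *: a) (x n - p).
  rewrite !inZl !inBr e. ring.
rewrite ReD. have := Re_CS (al *: b) (f - y n); have := Re_CS (al *: a) (x n - p).
rewrite (hnormB_sym f). lra.
Qed.

End Lim.

Section Main.
Variables (R : realType) (Hs G : hilbert R) (S A : lrel Hs Hs) (c : R) (Q : Hs -> G).
Hypotheses (hS : linrel S) (hA : linrel A) (hsa : selfadjoint A) (hsub : rsub S A)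
  (hbb : bounded_below_by A c) (hrep : representing_map S c Q).
Local Notation C := (R[i]).
Local Notation J := (companion S c Q).
Local Notation Jreg := (opval (rreg (adjoint J))).

Lemma mulA_orth m x x' : A 0 m -> A x x' -> inner m x = 0.
Proof. by move=> hm /hsa hx; rewrite (hx _ _ hm) in0l. Qed.

Lemma symA x x' y y' : A x x' -> A y y' -> inner y' x = inner y x'.
Proof. by move=> /hsa hx hy; apply: hx. Qed.

Lemma symA' x x' y y' : A x x' -> A y y' -> inner x y' = inner x' y.
Proof. by move=> hx hy; rewrite inC (symA hx hy) -inC. Qed.

Lemma tformA x x' y y' : A x x' -> A y y' -> tform A x y = inner x' y.
Proof.
move=> hx hy; rewrite /tform.
have ho := opvalP (ex_intro _ x' hx).
have hm := lin_sub hA ho hx; rewrite subrr in hm.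
by have := mulA_orth hm hy; rewrite inBl => /eqP; rewrite subr_eq0 => /eqP.
Qed.

Lemma beta_ge0 x x' : A x x' ->
  complex.Im (inner x' x - rC c * inner x x) = 0 /\ 0 <= complex.Re (inner x' x - rC c * inner x x).
Proof.
move=> hx; have [h1 h2] := le_rC (hbb hx).
rewrite inner_self -rCM ImB h1 Im_rC subr0 ReB Re_rC; split => //; lra.
Qed.

Lemma Sdom x : rdom S x -> rdom A x.
Proof. by move=> [y hy]; exists y; apply: hsub. Qed.

Lemma QL (a : C) x y : rdom S x -> rdom S y -> Q (a *: x + y) = a *: Q x + Q y.
Proof. by move=> hx hy; apply: hrep.1. Qed.
Lemma Q0 : Q 0 = 0.
Proof.
have h0 : rdom S 0 by exists 0; apply: lin0.
have := QL 1 h0 h0; rewrite scale1r addr0 scale1r => h.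
by apply: (@addrI _ (Q 0)); rewrite addr0 -h.
Qed.
Lemma QD x y : rdom S x -> rdom S y -> Q (x + y) = Q x + Q y.
Proof. by move=> hx hy; have := QL 1 hx hy; rewrite !scale1r. Qed.
Lemma QZ (a : C) x : rdom S x -> Q (a *: x) = a *: Q x.
Proof.
move=> hx; have h0 : rdom S 0 by exists 0; apply: lin0.
by have := QL a hx h0; rewrite !addr0 Q0 addr0.
Qed.

Lemma REP h h' : S h h' -> inner h' h = rC c * inner h h + inner (Q h) (Q h).
Proof.
move=> hh; have hd : rdom S h by exists h'.
rewrite -(hrep.2 _ _ hd hd) /tform.
have ho := opvalP hd.
have hm := lin_sub hS ho hh; rewrite subrr in hm.
have := mulA_orth (hsub hm) (hsub hh); rewrite inBl => /eqP; rewrite subr_eq0 => /eqP.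
by move=> ->.
Qed.

Lemma adjJ x g : adjoint J x g ->
  forall h h', S h h' -> inner (h' - rC c *: h) x = inner (Q h) g.
Proof. by move=> hx h h' hh; apply: hx; exists h, h'. Qed.

Lemma adjJ' x g : (forall h h', S h h' -> inner (h' - rC c *: h) x = inner (Q h) g) ->
  adjoint J x g.
Proof. by move=> hx u v [h [h' [hh [-> ->]]]]; apply: hx. Qed.

Lemma partA h h' f f' : S h h' -> A f f' -> rdom (adjoint J) f ->
  tform_shift A c (f - h) (f - h) - rC (hnorm (Jreg f - Q h) ^+ 2)
  = tform_shift A c f f - rC (hnorm (Jreg f) ^+ 2).
Proof.
move=> hh hf hd.
have hX := regP (adjoint_lin J) hd.
set X := Jreg f in hX *.
have e1 := adjJ hX hh.
rewrite inBl inZl in e1.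
have e3 := symA hf (hsub hh).
have e4 := symA' hf (hsub hh).
have e2 : inner X (Q h) = inner f' h - rC c * inner f h.
  by rewrite inC -e1 conjB conjM conj_rC -!inC e4.
have e5 := REP hh.
rewrite /tform_shift (tformA (lin_sub hA hf (hsub hh)) (lin_sub hA hf (hsub hh))).
rewrite (tformA hf hf) -!inner_self.
rewrite !inBl !inBr e2 -e1 e3 e5.
ring.
Qed.


Definition ell (f h h' : Hs) : C := inner (h' - rC c *: h) f.

Lemma ellL f (a : C) x x' y y' : ell f (a *: x + y) (a *: x' + y') = a * ell f x x' + ell f y y'.
Proof. rewrite /ell !inBl !inDl !inZl !inDl !inZl. ring. Qed.

Lemma ellZ f (a : C) x x' : ell f (a *: x) (a *: x') = a * ell f x x'.
Proof. by have := ellL f a x x' 0 0; rewrite !addr0 => ->; rewrite /ell scaler0 subr0 in0l addr0. Qed.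

Lemma ell_bound f f' h h' : A f f' -> S h h' ->
  complex.Re (ell f h h') ^+ 2 <= hnorm (Q h) ^+ 2 * complex.Re (inner f' f - rC c * inner f f).
Proof.
move=> hf hh.
have [_ hB] := beta_ge0 hf.
apply: quad; rewrite ?sqr_ge0 // => r.
have hp := lin_sub hA (hsub hh) (lin_scale (rC r) hA hf).
have [_ h0] := beta_ge0 hp.
have E : inner (h' - rC r *: f') (h - rC r *: f) - rC c * inner (h - rC r *: f) (h - rC r *: f)
   = rC (hnorm (Q h) ^+ 2) - rC r * (ell f h h' + Num.conj (ell f h h'))
     + rC (r ^+ 2) * (inner f' f - rC c * inner f f).
  rewrite /ell -inC.
  rewrite ?(inBl, inBr, inZl, inZr, conj_rC).
  rewrite (symA' hf (hsub hh)).
  rewrite (REP hh) -inner_self rCM. ring.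
rewrite E !ReD ReN ReM_rC ReD Re_conj !ReM_rC Re_rC in h0.
move: h0. lra.
Qed.

Lemma F_bound f f' h h' : A f f' -> S h h' ->
  2 * complex.Re (ell f h h') - hnorm (Q h) ^+ 2 <= complex.Re (inner f' f - rC c * inner f f).
Proof.
move=> hf hh; have hb := ell_bound hf hh.
have [_ hB] := beta_ge0 hf.
set x := complex.Re (ell f h h') in hb *.
set q := hnorm (Q h) in hb *.
set B := complex.Re _ in hb hB *.
have hq : 0 <= q ^+ 2 by apply: sqr_ge0.
have h4 : (2 * x) ^+ 2 <= (q ^+ 2 + B) ^+ 2.
  have := sqr_ge0 (q ^+ 2 - B). nra.
have := sq_le (addr_ge0 hq hB) h4. lra.
Qed.


Lemma riesz f f' : A f f' ->
  exists g, adjoint J f g /\ (forall m, adjoint J 0 m -> inner g m = 0) /\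
    hnorm g ^+ 2 <= complex.Re (inner f' f - rC c * inner f f).
Proof.
move=> hf.
set B := complex.Re (inner f' f - rC c * inner f f).
have [_ hB] := beta_ge0 hf; rewrite -/B in hB.
pose F h h' := 2 * complex.Re (ell f h h') - hnorm (Q h) ^+ 2.
pose E : set R := fun y => exists h h', S h h' /\ y = F h h'.
have hE : has_sup E.
  split; first by exists (F 0 0); exists 0, 0; split => //; apply: lin0.
  exists B => y [h [h' [hh ->]]]; exact: F_bound hf hh.
set s := sup E.
have hub : forall h h', S h h' -> F h h' <= s.
  by move=> h h' hh; apply: (sup_upper_bound hE); exists h, h'.
have hch : forall n : nat, exists p : Hs * Hs, S p.1 p.2 /\ s - (n.+1%:R : R)^-1 < F p.1 p.2.
  move=> n; have hp : 0 < (n.+1%:R : R)^-1 by rewrite invr_gt0 ltr0Sn.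
  have [y [h [h' [hh ->]]] hy] := sup_adherent hp hE.
  by exists (h, h').
have [pf hpf] := boolp.choice hch.
pose hn n := (pf n).1. pose hn' n := (pf n).2.
pose v n := Q (hn n).
have hSn : forall n, S (hn n) (hn' n) by move=> n; case: (hpf n).
have hFn : forall n, s - (n.+1%:R : R)^-1 < F (hn n) (hn' n) by move=> n; case: (hpf n).
have hdn : forall n, rdom S (hn n) by move=> n; exists (hn' n).
have hcau : forall n m, hnorm (v n - v m) ^+ 2 <= 4 * s - 2 * F (hn n) (hn' n) - 2 * F (hn m) (hn' m).
  move=> n m.
  set a : C := rC (2^-1).
  have hsum := lin_add hS (hSn n) (hSn m).
  have hmid := lin_scale a hS hsum.
  have := hub _ _ hmid.
  have hd : rdom S (hn n + hn m) by exists (hn' n + hn' m).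
  rewrite /F ellZ (QZ _ hd) (QD (hdn n) (hdn m)) hnormZ /a nc_rC.
  have -> : ell f (hn n + hn m) (hn' n + hn' m) = ell f (hn n) (hn' n) + ell f (hn m) (hn' m).
    by have := ellL f 1 (hn n) (hn' n) (hn m) (hn' m); rewrite !scale1r mul1r.
  rewrite ReM_rC ReD.
  have e1 := hnorm_sqD (v n) (v m).
  have e2 := hnorm_sqD (v n) (- v m).
  rewrite hnormN inNr ReN in e2.
  rewrite ger0_norm; last by rewrite invr_ge0 ler0n.
  rewrite exprMn e1 -/(v n) -/(v m).
  rewrite /F -/(v n) -/(v m) e2.
  lra.
have hcauchy : forall e : R, 0 < e -> exists N : nat, forall m n : nat, (N <= m)%N -> (N <= n)%N ->
    hnorm (v m - v n) < e.
  move=> e he.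
  have he4 : 0 < e ^+ 2 / 4 by rewrite divr_gt0 // exprn_gt0.
  have [N hN] := conv0_inv he4.
  exists N => m n hm hn0.
  have := hcau m n; have := hFn m; have := hFn n; have := hN m hm; have := hN n hn0.
  move=> h1 h2 h3 h4 h5.
  have {}h1 : (n.+1%:R : R)^-1 < e ^+ 2 / 4 := h1.
  have {}h2 : (m.+1%:R : R)^-1 < e ^+ 2 / 4 := h2.
  have hlt : hnorm (v m - v n) ^+ 2 < e ^+ 2.
    move: h1 h2 h3 h4 h5.
    set x := (n.+1%:R : R)^-1. set y := (m.+1%:R : R)^-1. lra.
  rewrite ltNge; apply/negP => hle.
  have := hnorm_ge0 (v m - v n). nra.
have [g hg] := hcomplete hcauchy.
have hgc : conv0 (fun n => hnorm (v n - g)) by exact: hg.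
have hD : forall h h', S h h' -> complex.Re (ell f h h' - inner (Q h) g) <= 0.
  move=> h h' hh.
  set D := complex.Re _.
  set q := hnorm (Q h).
  have hq : 0 <= q by apply: hnorm_ge0.
  have key : forall r : R, 0 < r -> 2 * r * D - r ^+ 2 * q ^+ 2 <= 0.
    move=> r hr.
    apply: (le0_conv (x := fun n => (n.+1%:R)^-1 + (2 * r * q) * hnorm (v n - g))); last first.
      apply: conv0D; first exact: conv0_inv.
      apply: conv0Z => //; rewrite mulr_ge0 // mulr_ge0 // ltW //.
    move=> n.
    have hp := lin_add hS (lin_scale (rC r) hS hh) (hSn n).
    have := hub _ _ hp.
    rewrite /F ellL (QL _ (ex_intro _ h' hh) (hdn n)) -/(v n).
    rewrite hnorm_sqD hnormZ nc_rC ger0_norm ?(ltW hr) // inZl ReD !ReM_rC.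
    have e1 := inBr (v n) g (Q h).
    have e2 := Re_CS (Q h) (v n - g).
    rewrite e1 ReB -/q in e2.
    have e3 := ler_wpM2l (ltW hr) e2.
    have := hFn n.
    rewrite /F -/(v n) /D ReB.
    move: e3. rewrite exprMn -/q. set dn := (n.+1%:R : R)^-1. nra.
  rewrite leNgt; apply/negP => hDp.
  have hK : 0 < q ^+ 2 + 1 by have := sqr_ge0 q; lra.
  have hr : 0 < D / (q ^+ 2 + 1) by rewrite divr_gt0.
  have := key _ hr.
  have -> : 2 * (D / (q ^+ 2 + 1)) * D - (D / (q ^+ 2 + 1)) ^+ 2 * q ^+ 2
          = D ^+ 2 * (q ^+ 2 + 2) / (q ^+ 2 + 1) ^+ 2.
    by field; rewrite gt_eqF.
  rewrite leNgt; apply/negP/negPn.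
  rewrite divr_gt0 ?exprn_gt0 // mulr_gt0 ?exprn_gt0 //.
  have := sqr_ge0 q; lra.
have hR1 : forall h h', S h h' -> inner (Q h) g = ell f h h'.
  move=> h h' hh; apply/eqP; rewrite eq_sym -subr_eq0; apply/eqP.
  apply: zero_of_re => a.
  have hd : rdom S h by exists h'.
  rewrite mulrBr -ellZ -inZl -(QZ _ hd).
  exact: hD (lin_scale a hS hh).
have hR3 : forall m, adjoint J 0 m -> inner g m = 0.
  move=> m hm; apply: zero_of_re => a.
  set m' := Num.conj a *: m.
  have -> : a * inner g m = inner g m' by rewrite inZr conjK.
  have h0 : forall n, inner (v n) m' = 0.
    move=> n; rewrite inZr -(adjJ hm (hSn n)) in0r mulr0 //.
  apply: (le0_conv (x := fun n => hnorm m' * hnorm (v n - g))); last first.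
    by apply: conv0Z => //; apply: hnorm_ge0.
  move=> n.
  have e1 := inBl g (v n) m'; rewrite h0 subr0 in e1.
  rewrite -e1 mulrC hnormB_sym. exact: Re_CS.
have hR2 : hnorm g ^+ 2 <= B.
  set M := Num.sqrt B.
  have hM : 0 <= M by apply: sqrtr_ge0.
  have hMB : M ^+ 2 = B by rewrite sqr_sqrtr.
  have hg0 := hnorm_ge0 g.
  have hle : hnorm g ^+ 2 - M * hnorm g <= 0.
    apply: (le0_conv (x := fun n => (M + hnorm g) * hnorm (v n - g))); last first.
      by apply: conv0Z => //; rewrite addr_ge0.
    move=> n.
    have hb := ell_bound hf (hSn n); rewrite -/B -/(v n) in hb.
    have hvn := hnorm_ge0 (v n).
    have hb2 : complex.Re (ell f (hn n) (hn' n)) <= hnorm (v n) * M.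
      apply: sq_le; first by rewrite mulr_ge0.
      by rewrite exprMn hMB.
    have e1 := inBl g (v n) g.
    have e2 : complex.Re (inner g g) = complex.Re (inner (g - v n) g) + complex.Re (inner (v n) g).
      by rewrite e1 ReB; lra.
    have e5 : inner (v n) g = ell f (hn n) (hn' n) := hR1 _ _ (hSn n).
    rewrite Re_inner_self e5 in e2.
    have e3 := Re_CS (g - v n) g; rewrite hnormB_sym in e3.
    have e4 := hnormD g (v n - g); rewrite addrC subrK in e4.
    have hvg := hnorm_ge0 (v n - g).
    nra.
  have : hnorm g <= M by nra.
  move=> hgM; rewrite -hMB. by apply: lerXn2r; rewrite ?nnegrE.
exists g; split; last by split.
apply: adjJ' => h h' hh. by rewrite (hR1 _ _ hh).
Qed.


Lemma partB f f' h h' : A f f' -> S h h' ->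
  rdom (adjoint J) f /\ rC (hnorm (Jreg f - Q h) ^+ 2) <= tform_shift A c (f - h) (f - h).
Proof.
move=> hf hh.
have [g [hg [ho hb]]] := riesz hf.
have hd : rdom (adjoint J) f by exists g.
split => //.
have hJ : Jreg f = g := regU (adjoint_lin J) hg ho.
have ha := partA hh hf hd.
move/eqP: ha; rewrite subr_eq => /eqP ->.
rewrite /tform_shift (tformA hf hf).
have [hI _] := beta_ge0 hf.
rewrite (rC_Re hI) hJ -rCB -rCD rC_le. lra.
Qed.

Local Notation K := (krein_ext S c Q).

Lemma KP x y : K x y -> exists g k, adjoint J x g /\ adjoint (adjoint J) g k /\ y = k + rC c *: x.
Proof. by move=> [y0 [[g [hg hk]] ->]]; exists g, y0. Qed.

Lemma K_sub x y x2 y2 : K x y -> K x2 y2 -> K (x - x2) (y - y2).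
Proof.
move=> /KP [g [k [hg [hk ->]]]] /KP [g2 [k2 [hg2 [hk2 ->]]]].
exists (k - k2); split.
  exists (g - g2); split; [exact: lin_sub (adjoint_lin _) hg hg2|exact: lin_sub (adjoint_lin _) hk hk2].
by rewrite scalerBr; rewrite opprD !addrA; congr (_ + _); rewrite -!addrA; congr (_ + _); rewrite addrC.
Qed.

Lemma Kreg x : rdom K x -> adjoint J x (Jreg x) /\ (forall m, adjoint J 0 m -> inner (Jreg x) m = 0).
Proof.
move=> [y /KP [g [k [hg [hk _]]]]].
have ho : forall m, adjoint J 0 m -> inner g m = 0.
  by move=> m hm; rewrite inC (hk _ _ hm) in0l conj0.
by rewrite (regU (adjoint_lin J) hg ho).
Qed.

Lemma tformK x w : rdom K x -> rdom K w ->
  tform K x w = inner (Jreg x) (Jreg w) + rC c * inner x w.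
Proof.
move=> hx hw; rewrite /tform.
have := opvalP hx => /KP [g [k [hg [hk ->]]]].
have ho : forall m, adjoint J 0 m -> inner g m = 0.
  by move=> m hm; rewrite inC (hk _ _ hm) in0l conj0.
rewrite (regU (adjoint_lin J) hg ho).
have [hw1 _] := Kreg hw.
rewrite inDl inZl; congr (_ + _).
by rewrite inC -(hk _ _ hw1) -inC.
Qed.

Lemma Kdom_sub x y : rdom K x -> rdom K y -> rdom K (x - y).
Proof. by move=> [a ha] [b hb]; exists (a - b); apply: K_sub. Qed.

Lemma Jreg_sub x y : rdom K x -> rdom K y -> Jreg (x - y) = Jreg x - Jreg y.
Proof.
move=> hx hy; have [h1 o1] := Kreg hx; have [h2 o2] := Kreg hy.
apply: regU; first exact: adjoint_lin.
  exact: lin_sub (adjoint_lin _) h1 h2.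
by move=> m hm; rewrite inBl o1 // o2 // subrr.
Qed.

Lemma jlim u f : tconv K u f -> conv0 (fun n => hnorm (Jreg (u n) - Jreg f)).
Proof.
move=> [hd [hc hcau]].
have hcauchy : forall e : R, 0 < e -> exists N : nat, forall m n : nat, (N <= m)%N -> (N <= n)%N ->
    hnorm (Jreg (u m) - Jreg (u n)) < e.
  move=> e he.
  have he2 : 0 < e ^+ 2 / 2 by rewrite divr_gt0 // exprn_gt0.
  set d := e ^+ 2 / (8 * (`|c| + 1)).
  have hc1 : 0 < `|c| + 1 by have := normr_ge0 c; lra.
  have hdp : 0 < d by apply: divr_gt0; [exact: exprn_gt0|exact: mulr_gt0].
  have [N1 h1] := hcau _ he2.
  have [N2 h2] := hc _ ltr01.
  have [N3 h3] := hc _ hdp.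
  exists (maxn N1 (maxn N2 N3)) => m n hm hn.
  have hm1 : (N1 <= m)%N := leq_trans (leq_maxl _ _) hm.
  have hn1 : (N1 <= n)%N := leq_trans (leq_maxl _ _) hn.
  have hm2 : (N2 <= m)%N := leq_trans (leq_trans (leq_maxl _ _) (leq_maxr _ _)) hm.
  have hn2 : (N2 <= n)%N := leq_trans (leq_trans (leq_maxl _ _) (leq_maxr _ _)) hn.
  have hm3 : (N3 <= m)%N := leq_trans (leq_trans (leq_maxr _ _) (leq_maxr _ _)) hm.
  have hn3 : (N3 <= n)%N := leq_trans (leq_trans (leq_maxr _ _) (leq_maxr _ _)) hn.
  have hk := nc_lt (h1 n m hn1 hm1).
  rewrite (tformK (Kdom_sub (hd m) (hd n)) (Kdom_sub (hd m) (hd n))) in hk.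
  rewrite (Jreg_sub (hd m) (hd n)) !inner_self -rCM -rCD in hk.
  have hk2 := Re_le_nc (rC (hnorm (Jreg (u m) - Jreg (u n)) ^+ 2 + c * hnorm (u m - u n) ^+ 2)).
  rewrite Re_rC in hk2.
  have hw : hnorm (u m - u n) <= hnorm (u m - f) + hnorm (u n - f).
    have -> : u m - u n = (u m - f) - (u n - f) by rewrite opprB addrA subrK.
    exact: hnormB.
  have a1 := h2 m hm2; have a2 := h2 n hn2; have a3 := h3 m hm3; have a4 := h3 n hn3.
  have b1 := hnorm_ge0 (u m - f); have b2 := hnorm_ge0 (u n - f); have b3 := hnorm_ge0 (u m - u n).
  have hw2 : hnorm (u m - u n) ^+ 2 <= 4 * d.
    have : hnorm (u m - u n) <= 2 * d by lra.
    have : hnorm (u m - u n) <= 2 by lra. nra.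
  have hcd : `|c| * (4 * d) = e ^+ 2 / 2 * (`|c| / (`|c| + 1)).
    rewrite /d. field. by rewrite gt_eqF.
  have hfr : `|c| / (`|c| + 1) <= 1.
    by rewrite ler_pdivrMr // mul1r; lra.
  have hcn : - (`|c| * hnorm (u m - u n) ^+ 2) <= c * hnorm (u m - u n) ^+ 2.
    have hc' : - c <= `|c| by rewrite -normrN ler_norm.
    have := sqr_ge0 (hnorm (u m - u n)). nra.
  have hcw : `|c| * hnorm (u m - u n) ^+ 2 <= `|c| * (4 * d) by rewrite ler_wpM2l.
  have hsq : hnorm (Jreg (u m) - Jreg (u n)) ^+ 2 < e ^+ 2.
    have : e ^+ 2 / 2 * (`|c| / (`|c| + 1)) <= e ^+ 2 / 2.
      by rewrite ler_piMr // ltW.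
    move: hk hk2. rewrite /nc => hk hk2. lra.
  rewrite ltNge; apply/negP => hle.
  have := hnorm_ge0 (Jreg (u m) - Jreg (u n)). nra.
have [p hp] := hcomplete hcauchy.
have hpc : conv0 (fun n => hnorm (Jreg (u n) - p)) by exact: hp.
suff -> : Jreg f = p by [].
apply: regU; first exact: adjoint_lin.
  apply: (adj_lim (y := u) (x := fun n => Jreg (u n))) => //.
  by move=> n; have [] := Kreg (hd n).
move=> m hm; apply: (orth_lim (x := fun n => Jreg (u n))) => // n.
by have [_ ->] := Kreg (hd n).
Qed.


Lemma partC : form_sub (form_closure A) (form_closure K) ->
  forall f f' h h', A f f' -> S h h' ->
  tform_shift A c (f - h) (f - h) = rC (hnorm (Jreg f - Q h) ^+ 2).
Proof.
move=> hc f f' h h' hf hh.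
have [hd _] := partB hf hh.
have hfc : form_closure A f f (tform A f f).
  have ht : tconv A (fun _ => f) f.
    split; first by move=> n; exists f'.
    split; first by move=> e he; exists 0%N => n _; rewrite subrr hnorm0.
    by move=> e he; exists 0%N => m n _ _; rewrite subrr /tform in0r normr0 /rC ltcR.
  exists (fun _ => f), (fun _ => f); split => //; split => //.
  by move=> e he; exists 0%N => n _; rewrite subrr normr0 /rC ltcR.
have [u [v [hu [hv hz]]]] := hc _ _ _ hfc.
have hju := jlim hu; have hjv := jlim hv.
have [hud [huc _]] := hu; have [hvd [hvc _]] := hv.
set z := tform A f f in hz.
set T := inner (Jreg f) (Jreg f) + rC c * inner f f.
have hzT : z = T.
  apply/eqP; rewrite -subr_eq0; apply/eqP; apply: nc_eq0.
  apply/eqP; rewrite eq_le nc_ge0 andbT.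
  apply: (le0_conv (x := fun n => nc (tform K (u n) (v n) - z)
     + nc (inner (Jreg (u n)) (Jreg (v n)) - inner (Jreg f) (Jreg f))
     + `|c| * nc (inner (u n) (v n) - inner f f))).
    move=> n. rewrite (tformK (hud n) (hvd n)).
    have -> : z - T = - (inner (Jreg (u n)) (Jreg (v n)) + rC c * inner (u n) (v n) - z)
       + (inner (Jreg (u n)) (Jreg (v n)) - inner (Jreg f) (Jreg f))
       + rC c * (inner (u n) (v n) - inner f f).
      rewrite /T. ring.
    apply: (le_trans (ncD _ _)); rewrite ncM nc_rC.
    apply: lerD => //. apply: (le_trans (ncD _ _)). by rewrite ncN.
  apply: conv0D; first apply: conv0D.
  - move=> e he; have [N hN] := hz _ he; exists N => n hn.
    have := hN n hn. rewrite (tformK (hud n) (hvd n)) => hh2. exact: nc_lt.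
  - exact: inner_lim.
  - apply: conv0Z; first exact: normr_ge0. exact: inner_lim.
have ha := partA hh hf hd.
have e1 : tform_shift A c f f = rC (hnorm (Jreg f) ^+ 2).
  by rewrite /tform_shift -/z hzT /T -inner_self addrK.
rewrite e1 subrr in ha.
by move/eqP: ha; rewrite subr_eq0 => /eqP.
Qed.

Lemma final_all : 
  (forall h h' f f', S h h' -> A f f' -> rdom (adjoint J) f ->
     tform_shift A c (f - h) (f - h) - rC (hnorm (Jreg f - Q h) ^+ 2)
     = tform_shift A c f f - rC (hnorm (Jreg f) ^+ 2)) /\
  (forall f f' h h', A f f' -> S h h' ->
     rdom (adjoint J) f /\
     rC (hnorm (Jreg f - Q h) ^+ 2) <= tform_shift A c (f - h) (f - h)) /\
  (form_sub (form_closure A) (form_closure K) ->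
   forall f f' h h', A f f' -> S h h' ->
     tform_shift A c (f - h) (f - h) = rC (hnorm (Jreg f - Q h) ^+ 2)).
Proof.
have _ := (hS, hA, hsa, hsub, hbb, hrep).
split; first by move=> h h' f f'; apply: partA.
split; first by move=> f f' h h'; apply: partB.
exact: partC.
Qed.

End Main.

Theorem lemma7p3 (R : realType) (Hs G : hilbert R) (S A : lrel Hs Hs)
    (gamma c : R) (Q : Hs -> G) :
  linrel S -> semibounded S -> lower_bound S gamma -> c <= gamma ->
  representing_map S c Q ->
  linrel A -> selfadjoint A -> rsub S A -> semibounded A -> bounded_below_by A c ->
  let J := companion S c Q in
  let Jreg := opval (rreg (adjoint J)) in
  (* (a) *)
  (forall h h' f f', S h h' -> A f f' -> rdom (adjoint J) f ->
     tform_shift A c (f - h) (f - h) - rC (hnorm (Jreg f - Q h) ^+ 2)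
     = tform_shift A c f f - rC (hnorm (Jreg f) ^+ 2)) /\
  (* (b) *)
  (forall f f' h h', A f f' -> S h h' ->
     rdom (adjoint J) f /\
     rC (hnorm (Jreg f - Q h) ^+ 2) <= tform_shift A c (f - h) (f - h)) /\
  (* (c) *)
  (form_sub (form_closure A) (form_closure (krein_ext S c Q)) ->
   forall f f' h h', A f f' -> S h h' ->
     tform_shift A c (f - h) (f - h) = rC (hnorm (Jreg f - Q h) ^+ 2)).
Proof.
move=> hS _ _ _ hrep hA hsa hsub _ hbb J Jreg.
exact: (final_all hS hA hsa hsub hbb hrep).
Qed.
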